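(* Let $n$ be a nonnegative integer and $a,c\in\mathbb{C}$ such that all expressions below are defined (no lower parameter zero or a negative integer). Then \[ {}_3F_2\!\left(\left.{-n,a,c \atop \frac{a-n}{2},\frac{1+a-n}{2}}\right| \frac{1}{4}\right) =\frac{(1+2c-a)_n}{(1-a)_n}\,{}_3F_2\!\left(\left.{-n,1+2c-a+n,c \atop \frac{1+2c-a}{2},\frac{2+2c-a}{2}}\right| \frac{1}{4}\right). \] Equivalently, with $M_n(a,c)=(1-a)_n(1+c-a)_n\,{}_3F_2\!\left(\left.{-n,a,c \atop \frac{a-n}{2},\frac{1+a-n}{2}}\right| \frac{1}{4}\right)$ one has $M_n(a,c)=M_n(1+2c-a+n,c)$, and $L_n(x,y)=M_n\!\left(x,\frac{x+y-n-1}{2}\right)$ satisfies $L_n(x,y)=L_n(y,x)$.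
   Context: For $a\in\mathbb{C}$, $(a)_0=1$ and $(a)_k=a(a+1)\cdots(a+k-1)$ for $k\ge1$. The hypergeometric series is ${}_rF_s\!\left(\left.{\alpha_1,\ldots,\alpha_r\atop \beta_1,\ldots,\beta_s}\right|z\right)=\sum_{k\ge0}\frac{(\alpha_1)_k\cdots(\alpha_r)_k}{k!(\beta_1)_k\cdots(\beta_s)_k}z^k$, with no lower parameter zero or a negative integer; when an upper parameter is $-n$ it is a finite sum over $0\le k\le n$. *)

(* Defs.v *)
From mathcomp Require Import all_boot all_order all_algebra.
From mathcomp Require Import complex.
From mathcomp Require Import reals.
Set Implicit Arguments. Unset Strict Implicit. Unset Printing Implicit Defensive.
Import Order.TTheory GRing.Theory Num.Theory.
Local Open Scope ring_scope.

Definition poch {F : ringType} (a : F) (k : nat) : F :=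
  \prod_(i < k) (a + i%:R).

Definition lower_ok {F : ringType} (b : F) : Prop :=
  forall m : nat, b <> - m%:R.

Definition F32 {F : fieldType} (n : nat) (a2 a3 b1 b2 z : F) : F :=
  \sum_(k < n.+1)
    (poch (- n%:R) k * poch a2 k * poch a3 k)
      / (k`!%:R * poch b1 k * poch b2 k) * z ^+ k.

(* Main.v *)
Require Import Defs.
From mathcomp Require Import all_boot all_order all_algebra.
From mathcomp Require Import complex.
From mathcomp Require Import reals.
From mathcomp Require Import ring zify.
Import Order.TTheory GRing.Theory Num.Theory.
Local Open Scope ring_scope.

Module PA.
Set Implicit Arguments. Unset Strict Implicit.
Section S.
Variable F : fieldType.
Implicit Types a c x : F.

Lemma poch0 x : poch x 0 = 1.
Proof. by rewrite /poch big_ord0. Qed.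

Lemma pochS x k : poch x k.+1 = poch x k * (x + k%:R).
Proof. by rewrite /poch big_ord_recr. Qed.

Lemma pochSl x k : poch x k.+1 = x * poch (x + 1) k.
Proof.
elim: k => [|k IH]; first by rewrite pochS !poch0; ring.
by rewrite pochS IH pochS; ring.
Qed.

Lemma pochD x p q : poch x (p + q) = poch x p * poch (x + p%:R) q.
Proof.
elim: q => [|q IH]; first by rewrite addn0 poch0 mulr1.
by rewrite addnS !pochS IH natrD; ring.
Qed.

Lemma poch_refl x m : poch x m = (-1) ^+ m * poch (- x - m%:R + 1) m.
Proof.
elim: m => [|m IH]; first by rewrite !poch0 expr0 mulr1.
rewrite pochS IH pochSl exprS.
have -> : - x - m.+1%:R + 1 + 1 = - x - m%:R + 1 by ring.
ring.
Qed.

Definition Pn n a c : F := \sum_(k < n.+1)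
  (-1) ^+ k * 'C(n, k)%:R * poch c k * poch (a + (2 * k)%:R - n%:R) (n - k).

Lemma Pterm (s pc pc1 X X1 a c : F) (k n : nat) :
  c * pc1 = pc * (c + k%:R) ->
  s * pc * ((a + (2*k)%:R - n%:R - 1) * X) + (- s) * (c * pc1) * X1 =
  (a - n.+1%:R - 2%:R * c) * (s * pc * X) + 2%:R * c * (s * pc1 * X)
  - c * (s * pc1 * X1).
Proof.
move=> H; apply/eqP; rewrite -subr_eq0.
have -> : s * pc * ((a + (2*k)%:R - n%:R - 1) * X) + (- s) * (c * pc1) * X1 -
  ((a - n.+1%:R - 2%:R * c) * (s * pc * X) + 2%:R * c * (s * pc1 * X)
  - c * (s * pc1 * X1)) = (c * pc1 - pc * (c + k%:R)) * (- 2%:R * s * X) by ring.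
by rewrite H subrr mul0r.
Qed.

Lemma binS' n k : 'C(n.+1, k) = 'C(n, k) + (if k is k'.+1 then 'C(n, k') else 0)%N.
Proof. by case: k => [|k]; rewrite ?bin0 ?addn0 ?binS. Qed.

Lemma Prec n a c : Pn n.+1 a c = (a - n.+1%:R - 2%:R * c) * Pn n a c
  + 2%:R * c * Pn n a (c + 1) - c * Pn n (a + 1) (c + 1).
Proof.
rewrite /Pn.
under eq_bigr => k _ do rewrite binS' natrD mulrDr mulrDl mulrDl.
rewrite big_split /= big_ord_recr /= bin_small // mulr0n mulr0 !mul0r addr0.
rewrite [\sum_(i < n.+2) _]big_ord_recl mulr0n mulr0 !mul0r add0r.
rewrite !mulr_sumr -!big_split -sumrB /=.

apply: eq_bigr => i _.
have hi : (i <= n)%N by rewrite -ltnS.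
rewrite /bump leq0n add1n add0n subSS subSn // pochSl [poch c i.+1]pochSl exprS.
have -> : a + (2 * i)%:R - n.+1%:R = a + (2 * i)%:R - n%:R - 1 by ring.
have -> : a + (2 * i)%:R - n%:R - 1 + 1 = a + (2 * i)%:R - n%:R by ring.
have -> : a + (2 * i.+1)%:R - n.+1%:R = a + 1 + (2 * i)%:R - n%:R by ring.
set s := (-1) ^+ i * 'C(n, i)%:R.
have -> : -1 * (-1) ^+ i * 'C(n, i)%:R * (c * poch (c + 1) i) *
   poch (a + 1 + (2 * i)%:R - n%:R) (n - i) =
   (- s) * (c * poch (c + 1) i) * poch (a + 1 + (2 * i)%:R - n%:R) (n - i)
  by rewrite /s; ring.
have H : c * poch (c+1) i = poch c i * (c + i%:R) by rewrite -pochSl pochS.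
rewrite -(@Pterm s _ _ _ _ a c i n H).
ring.
Qed.
End S.
End PA.
Import PA.

Module PB.
Fixpoint dd (n j : nat) : nat := match n with
 | 0 => (j == 0)%N
 | n'.+1 => dd n' j + (if j is j'.+1 then 2 * (n' + 2 - 2 * j) * dd n' j' else 0)
 end.

Lemma dd0 n j : (n < 2 * j)%N -> dd n j = 0%N.
Proof.
elim: n j => [|n IH] j /=.
  by case: j.
move=> h; rewrite IH; last by lia.
case: j h => [//|j] h.
case: (ltnP n (2 * j)) => h2; first by rewrite IH // muln0.
have -> : (n + 2 - 2 * j.+1 = 0)%N by lia.
by rewrite mul0n.
Qed.

Section S.
Variable F : fieldType.

Definition Rn n (a c : F) : F := \sum_(j < n.+1)
  (-1) ^+ j * (dd n j)%:R * poch c j * poch (a - c - n%:R + j%:R) (n - 2 * j).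

Lemma Rterm n j (a c : F) : (j <= n)%N ->
  (a - n.+1%:R - 2%:R * c) * ((-1) ^+ j * (dd n j)%:R * poch c j * poch (a - c - n%:R + j%:R) (n - 2 * j))
  + 2%:R * c * ((-1) ^+ j * (dd n j)%:R * poch (c + 1) j * poch (a - (c + 1) - n%:R + j%:R) (n - 2 * j))
  - c * ((-1) ^+ j * (dd n j)%:R * poch (c + 1) j * poch (a + 1 - (c + 1) - n%:R + j%:R) (n - 2 * j))
  = (-1) ^+ j * (dd n j)%:R * poch c j * poch (a - c - n.+1%:R + j%:R) (n.+1 - 2 * j)
  - (-1) ^+ j * (2 * (n - 2 * j) * dd n j)%:R * poch c j.+1 * poch (a - c - n%:R + j%:R) (n - 2 * j - 1).
Proof.
move=> hj.
case: (ltnP n (2 * j)) => h2.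
  by rewrite dd0 // muln0 !mulr0n !mulr0 !mul0r; ring.
set s : F := (-1) ^+ j * (dd n j)%:R.
have H : c * poch (c+1) j = poch c j * (c + j%:R) by rewrite -pochSl pochS.
have E1 : forall u, c * (s * poch (c+1) j * u) = s * (poch c j * (c + j%:R)) * u.
  by move=> u; rewrite -H; ring.
have E2 : forall u, 2%:R * c * (s * poch (c+1) j * u) = 2%:R * (s * (poch c j * (c + j%:R)) * u).
  by move=> u; rewrite -H; ring.
rewrite E1 E2 pochS.
have -> : a - (c + 1) - n%:R + j%:R = (a - c - n%:R + j%:R) - 1 by ring.
have -> : a + 1 - (c + 1) - n%:R + j%:R = (a - c - n%:R + j%:R) by ring.
have -> : a - c - n.+1%:R + j%:R = (a - c - n%:R + j%:R) - 1 by ring.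
set Y := a - c - n%:R + j%:R.
rewrite natrM.
have -> : (a - n.+1%:R - 2%:R * c) = Y - 1 - (c + j%:R).
  by rewrite /Y; ring.
case E: (n - 2 * j)%N => [|m0].
  have -> : (n.+1 - 2 * j = 1)%N by lia.
  rewrite !poch0 pochS poch0; ring.
have -> : (n.+1 - 2 * j = m0.+2)%N by lia.
rewrite subn1 /= [poch (Y - 1) m0.+2]pochSl [poch (Y - 1) m0.+1]pochSl.
have -> : Y - 1 + 1 = Y by ring.
rewrite !pochS /s; ring.
Qed.

Lemma Rrec n (a c : F) : Rn n.+1 a c = (a - n.+1%:R - 2%:R * c) * Rn n a c
  + 2%:R * c * Rn n a (c + 1) - c * Rn n (a + 1) (c + 1).
Proof.
rewrite /Rn.
transitivity (\sum_(j < n.+1)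
  ((-1) ^+ j * (dd n j)%:R * poch c j * poch (a - c - n.+1%:R + j%:R) (n.+1 - 2 * j)
  - (-1) ^+ j * (2 * (n - 2 * j) * dd n j)%:R * poch c j.+1 * poch (a - c - n%:R + j%:R) (n - 2 * j - 1))); last first.
  rewrite !mulr_sumr -big_split -sumrB /=.
  by apply: eq_bigr => j _; rewrite Rterm // -ltnS.
under eq_bigr => j _ do rewrite /= natrD mulrDr mulrDl mulrDl.
rewrite big_split /= big_ord_recr /= dd0 ?mulr0n ?mulr0 ?mul0r ?addr0; last by lia.
rewrite [\sum_(i < n.+2) _]big_ord_recl mulr0n mulr0 !mul0r add0r sumrB.
congr (_ + _); rewrite -sumrN; apply: eq_bigr => i _.
rewrite lift0.
have -> : (n + 2 - 2 * i.+1 = n - 2 * i)%N by lia.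
have -> : (n.+1 - 2 * i.+1 = n - 2 * i - 1)%N by lia.
have -> : a - c - n.+1%:R + i.+1%:R = a - c - n%:R + i%:R by ring.
rewrite exprS; ring.
Qed.

Lemma PR n (a c : F) : Pn n a c = Rn n a c.
Proof.
elim: n a c => [|n IH] a c.
  by rewrite /Pn /Rn !big_ord1 /= !poch0 !mulr1.
by rewrite Prec Rrec !IH.
Qed.

Lemma Rsym n (a c : F) : Rn n (2%:R * c + n.+1%:R - a) c = (-1) ^+ n * Rn n a c.
Proof.
rewrite /Rn mulr_sumr; apply: eq_bigr => j _.
case: (ltnP n (2 * j)) => h2.
  by rewrite dd0 // !mulr0n !mulr0 !mul0r mulr0.
rewrite [poch (2%:R * c + _ - a - c - _ + _) _]poch_refl.
have -> : - (2%:R * c + n.+1%:R - a - c - n%:R + j%:R) - (n - 2 * j)%:R + 1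
  = a - c - n%:R + j%:R by rewrite natrB // natrM; ring.
have -> : ((-1) ^+ n : F) = (-1) ^+ (n - 2 * j) * (-1) ^+ (2 * j).
  by rewrite -exprD subnK.
rewrite exprM expr2 mulrNN mulr1 expr1n; ring.
Qed.
End S.
End PB.
Import PB.

Module PC.
Set Implicit Arguments. Unset Strict Implicit.
Section S.
Variable F : numFieldType.

Lemma nat_neq0 m : (m.+1%:R : F) != 0.
Proof. by rewrite pnatr_eq0. Qed.

Lemma poch_neq0 (x : F) k : lower_ok x -> poch x k != 0.
Proof.
move=> h; elim: k => [|k IH]; first by rewrite poch0 oner_eq0.
rewrite pochS mulf_neq0 //; apply/eqP => /eqP.
by rewrite addr_eq0 => /eqP /h.
Qed.

Lemma poch_dup (x : F) k :
  poch x (2 * k) = poch (x / 2%:R) k * poch ((x + 1) / 2%:R) k * 4%:R ^+ k.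
Proof.
have h2 := nat_neq0 1.
elim: k => [|k IH]; first by rewrite !poch0 expr0 !mulr1.
have -> : (2 * k.+1 = (2 * k).+2)%N by lia.
rewrite !pochS IH exprS.
have -> : (2 * k).+1%:R = (2 * k)%:R + (1 : F) by rewrite -natr1.
rewrite natrM; field; done.
Qed.

Lemma poch_nat m k : poch (m%:R + 1 : F) k * m`!%:R = (m + k)`!%:R.
Proof.
elim: k => [|k IH]; first by rewrite poch0 mul1r addn0.
rewrite pochS addnS factS natrM -IH; ring.
Qed.

Lemma poch_negn n k : (k <= n)%N ->
  poch (- n%:R : F) k = (-1) ^+ k * 'C(n, k)%:R * k`!%:R.
Proof.
move=> hk.
rewrite poch_refl.
have -> : - - (n%:R : F) - k%:R + 1 = (n - k)%:R + 1 by rewrite natrB //; ring.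
rewrite -mulrA; congr (_ * _).
apply: (mulIf (x := (n - k)`!%:R)); first by rewrite pnatr_eq0 -lt0n fact_gt0.
by rewrite poch_nat subnK // -(bin_fact hk) !natrM mulrA.
Qed.


Lemma lower_ok_dup (x : F) k : lower_ok (x / 2%:R) -> lower_ok ((x + 1) / 2%:R) ->
  poch x (2 * k) != 0.
Proof.
move=> h1 h2; rewrite poch_dup !mulf_neq0 ?poch_neq0 //.
by rewrite expf_neq0 // (nat_neq0 3).
Qed.

Lemma lower_ok_n (x : F) n : lower_ok (x / 2%:R) -> lower_ok ((x + 1) / 2%:R) ->
  poch x n != 0.
Proof.
move=> h1 h2; have := lower_ok_dup n h1 h2.
have -> : (2 * n = n + n)%N by lia.
by rewrite pochD mulf_eq0 negb_or => /andP [].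
Qed.

Lemma F32_P n (x c b1 b2 : F) (e1 : b1 = (x - n%:R) / 2%:R)
  (e2 : b2 = (1 + x - n%:R) / 2%:R) (h1 : lower_ok b1) (h2 : lower_ok b2) :
  F32 n x c b1 b2 (4%:R)^-1 * poch (x - n%:R) n = Pn n x c.
Proof.
rewrite /F32 /Pn mulr_suml; apply: eq_bigr => k _.
have hk : (k <= n)%N by rewrite -ltnS.
rewrite poch_negn // exprVn.
have D : poch b1 k * poch b2 k * 4%:R ^+ k = poch (x - n%:R) (2 * k).
  by rewrite poch_dup e1 e2; congr (poch _ _ * poch _ _ * _); ring.
have Key : poch (x - n%:R) n * poch x k = poch (x - n%:R) (2 * k) * poch (x + (2 * k)%:R - n%:R) (n - k).
  have E1 : poch (x - n%:R) (n + k) = poch (x - n%:R) n * poch x k.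
    by rewrite pochD; congr (_ * poch _ _); ring.
  have E2 : poch (x - n%:R) (2 * k + (n - k)) = poch (x - n%:R) (2 * k) * poch (x + (2 * k)%:R - n%:R) (n - k).
    by rewrite pochD; congr (_ * poch _ _); ring.
  rewrite -E1 -E2; congr poch; lia.
have nz1 := poch_neq0 k h1.
have nz2 := poch_neq0 k h2.
have nz3 : (k`!%:R : F) != 0 by rewrite pnatr_eq0 -lt0n fact_gt0.
have nz4 : (4%:R ^+ k : F) != 0 by rewrite expf_neq0 // (nat_neq0 3).
set s : F := (-1) ^+ k * 'C(n, k)%:R.
set P1 := poch b1 k. set P2 := poch b2 k. set Q := poch (x - n%:R) n.
set px := poch x k. set pc := poch c k.
transitivity (s * pc * (Q * px) / (P1 * P2 * 4%:R ^+ k)).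
  by rewrite /s; field; rewrite ?nz1 ?nz2 ?nz3 ?nz4.
rewrite /Q /px Key -D /P1 /P2; field; by rewrite nz1 nz2 nz4.
Qed.
End S.
End PC.
Import PC.

Theorem mainTheorem14 (R : realType) (n : nat) (a c : R[i])
  (h1 : lower_ok ((a - n%:R) / 2%:R))
  (h2 : lower_ok ((1 + a - n%:R) / 2%:R))
  (h3 : lower_ok ((1 + 2%:R * c - a) / 2%:R))
  (h4 : lower_ok ((2%:R + 2%:R * c - a) / 2%:R))
  (h5 : poch (1 - a) n != 0) :
  F32 n a c ((a - n%:R) / 2%:R) ((1 + a - n%:R) / 2%:R) (4%:R)^-1
  = poch (1 + 2%:R * c - a) n / poch (1 - a) n *
    F32 n (1 + 2%:R * c - a + n%:R) c
        ((1 + 2%:R * c - a) / 2%:R) ((2%:R + 2%:R * c - a) / 2%:R) (4%:R)^-1.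
Proof.
set b := 1 + 2%:R * c - a.
have eL := @F32_P _ n a c _ _ (erefl _) (erefl _) h1 h2.
have e1 : b / 2%:R = (b + n%:R - n%:R) / 2%:R by congr (_ / _); ring.
have e2 : (2%:R + 2%:R * c - a) / 2%:R = (1 + (b + n%:R) - n%:R) / 2%:R.
  by rewrite /b; congr (_ / _); ring.
have eR := @F32_P _ n (b + n%:R) c (b / 2%:R) ((2%:R + 2%:R * c - a) / 2%:R) e1 e2 h3 h4.
set M := F32 _ _ _ _ _ _ in eR *.
have hb : poch b n != 0.
  apply: lower_ok_n => //.
  by have -> : (b + 1) / 2%:R = (2%:R + 2%:R * c - a) / 2%:R by rewrite /b; ring.
rewrite (_ : b + n%:R - n%:R = b) in eR; last by ring.
rewrite !PR in eL eR.
rewrite (_ : b + n%:R = 2%:R * c + n.+1%:R - a) in eR; last by rewrite /b; ring.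
rewrite Rsym in eR.
rewrite (_ : poch (a - n%:R) n = (-1) ^+ n * poch (1 - a) n) in eL; last first.
  by rewrite poch_refl; congr (_ * poch _ _); ring.
set L := F32 _ _ _ _ _ _ in eL *.
set sg : R[i] := (-1) ^+ n in eL eR.
have hs : sg * sg = 1 by rewrite /sg -exprMn mulrNN mulr1 expr1n.
have -> : M = sg * Rn _ n a c / poch b n by rewrite -eR mulfK.
rewrite -eL.
have hq := h5.
rewrite [RHS](_ : _ = (sg * sg) * L); first by rewrite hs mul1r.
by field; rewrite hb h5.
Qed.
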